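(* Let $D=(V,A)$ be a directed graph with source $s\in V$, sink $t\in V$, capacities $u\in\mathbb{R}_+^A$, interdiction costs $c\in\mathbb{R}_+^A$, and interdictor budget $B_I\ge 0$, and assume at least one arc has positive interdiction cost. For each arc $f\in A$ with $c_f>0$, let $x^{(f)}$ be an optimal solution of the linear program $[\mathrm{LP}_{\mathrm{flow}}(f)]$ (defined in the context), and let $f^*$ be an arc for which the optimal objective value of $[\mathrm{LP}_{\mathrm{flow}}(f^* )]$ is largest. Then $x^{(f^* )}$ is an optimal strategy for the flow player, i.e. $x^{(f^* )}\in\arg\max_{x\in X}\min_{z\in\Omega}\mathrm{val}(x,z)$.
   Context: $\mathcal{P}$ is the set of all $s$-$t$-paths in $D$ (a path is identified with its arc set). The flow player's strategies are the feasible path flows $X=\{x\in\mathbb{R}_+^{\mathcal{P}}:\sum_{P\in\mathcal{P}:e\in P}x_P\le u_e\ \forall e\in A\}$. After the flow player chooses $x$, the interdictor chooses $z\in\Omega=\{z\in\mathbb{R}_+^{A\times\mathcal{P}}:\sum_{e\in A}c_e\sum_{P\in\mathcal{P}:e\in P}z_{e,P}\le B_I\}$ ($z_{e,P}$ is the amount of flow stolen from path $P$ at arc $e$). The value is $\mathrm{val}(x,z)=\sum_{P\in\mathcal{P}}\big(x_P-\sum_{e\in P}z_{e,P}\big)^+$; the flow player maximizes $\min_{z\in\Omega}\mathrm{val}(x,z)$. For a fixed arc $f$ with $c_f>0$ define $B'=B_I/c_f$, $c'_e=\min\{c_e/c_f,1\}$ for $e\in A$, and $\bar c'_P=\min_{e\in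 P}c'_e$ for $P\in\mathcal{P}$. Then $[\mathrm{LP}_{\mathrm{flow}}(f)]$ is: maximize $\sum_{P\in\mathcal{P}}\bar c'_P x_P-B'$ subject to $\sum_{P\in\mathcal{P}:e\in P}x_P\le u_e$ for all $e\in A$ and $x_P\ge 0$ for all $P\in\mathcal{P}$. *)

(* Defs.v *)
From HB Require Import structures.
From mathcomp Require Import all_boot all_order all_algebra.
From mathcomp Require Import classical_sets reals.
Set Implicit Arguments. Unset Strict Implicit. Unset Printing Implicit Defensive.
Import Order.TTheory GRing.Theory Num.Theory.
Local Open Scope ring_scope.
Local Open Scope classical_set_scope.

Section Interdiction.
Variables (V A : finType) (tl hd : A -> V) (s t : V).

Fixpoint walk_to_t (v : V) (p : seq A) : bool :=
  match p with
  | [::] => v == t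
  | e :: p' => (tl e == v) && walk_to_t (hd e) p'
  end.

Definition is_st_path_seq (p : seq A) : bool :=
  walk_to_t s p && uniq (s :: map hd p).

(* a set of arcs is an s-t path if it is the arc set of a simple s-t path
   (a simple path uses at most #|A| arcs, so the bound is harmless) *)
Definition is_st_path (P : {set A}) : bool :=
  [exists n : 'I_#|A|.+1, exists p : n.-tuple A,
     is_st_path_seq p && (P == [set e in p])].

Definition stpath := {P : {set A} | is_st_path P}.

Variable R : realType.
Variables (u c : A -> R) (BI : R).

Definition feasible_flow (x : stpath -> R) : Prop :=
  (forall P, 0 <= x P) /\
  (forall e : A, \sum_(P : stpath | e \in val P) x P <= u e).

Definition Omega : set (A -> stpath -> R) :=
  [set z | (forall e P, 0 <= z e P) /\
           \sum_(e : A) c e * \sum_(P : stpath | e \in val P) z e P <= BI].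

Definition val_xz (x : stpath -> R) (z : A -> stpath -> R) : R :=
  \sum_(P : stpath) Num.max 0 (x P - \sum_(e in val P) z e P).

Definition flow_value (x : stpath -> R) : R :=
  inf [set val_xz x z | z in Omega].

Definition optimal_flow_strategy (x : stpath -> R) : Prop :=
  feasible_flow x /\
  forall y, feasible_flow y -> flow_value y <= flow_value x.

Definition Bp (f : A) : R := BI / c f.
Definition cp (f e : A) : R := Num.min (c e / c f) 1.
Definition cbarp (f : A) (P : stpath) : R :=
  \big[Num.min/1]_(e in val P) cp f e.

Definition LP_obj (f : A) (x : stpath -> R) : R :=
  \sum_(P : stpath) cbarp f P * x P - Bp f.

Definition LP_optimal (f : A) (x : stpath -> R) : Prop :=
  feasible_flow x /\
  forall y, feasible_flow y -> LP_obj f y <= LP_obj f x.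

End Interdiction.

(* Main.v *)
Require Import Defs.
From HB Require Import structures.
From mathcomp Require Import all_boot all_order all_algebra.
From mathcomp Require Import classical_sets reals.
From mathcomp Require Import ring lra.
Import Order.TTheory GRing.Theory Num.Theory.
Local Open Scope ring_scope.
Set Implicit Arguments. Unset Strict Implicit. Unset Printing Implicit Defensive.
Lemma fin_argmin (R : realType) (I : finType) (Pr : pred I) (F : I -> R) i0 :
  Pr i0 -> exists i, Pr i /\ forall j, Pr j -> F i <= F j.
Proof. by move=> H; case: (arg_minP F H) => i Pi Hi; exists i. Qed.

Lemma fin_argmax (R : realType) (I : finType) (Pr : pred I) (F : I -> R) i0 :
  Pr i0 -> exists i, Pr i /\ forall j, Pr j -> F j <= F i.
Proof. by move=> H; case: (arg_maxP F H) => i Pi Hi; exists i. Qed.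

Section Proof1.
Variables (V A : finType) (tl hd : A -> V) (s t : V).
Variables (R : realType) (u c : A -> R) (BI : R).
Hypotheses (hc : forall e, 0 <= c e) (hB : 0 <= BI).

Local Notation PT := (stpath tl hd s t).

Lemma val_ge0 (x : PT -> R) z : 0 <= val_xz x z.
Proof. by apply: sumr_ge0 => P _; rewrite le_max lexx. Qed.

Lemma Omega0 : Omega c BI (fun (_ : A) (_ : PT) => 0 : R).
Proof.
split => // ; rewrite big1 // => e _; rewrite big1 ?mulr0 //.
Qed.

Lemma cbarp_ge0 f (P : PT) : 0 < c f -> 0 <= cbarp c f P.
Proof.
move=> cf; apply: le_bigmin => // e _.
by rewrite le_min ler01 andbT divr_ge0 // ltW.
Qed.

Lemma cbarp_le1 f (P : PT) : cbarp c f P <= 1.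
Proof. exact: bigmin_le_id. Qed.

Lemma cbarp_le f (P : PT) e : 0 < c f -> e \in val P -> cbarp c f P <= c e / c f.
Proof.
move=> cf eP; apply: le_trans (bigmin_le_cond _ _ eP) _.
by rewrite /cp ge_min lexx.
Qed.

Lemma lower_bound f (x : PT -> R) z : 0 < c f -> (forall P, 0 <= x P) ->
  Omega c BI z -> LP_obj c BI f x <= val_xz x z.
Proof.
move=> cf x0 [z0 zB].
pose S (P : PT) := \sum_(e in val P) z e P.
have H1 : forall P, cbarp c f P * x P - cbarp c f P * S P <= Num.max 0 (x P - S P).
  move=> P; have := cbarp_ge0 P cf; have := cbarp_le1 f P.
  have : 0 <= S P by apply: sumr_ge0.
  case: (lerP 0 (x P - S P)) => h.
    move=> _ h1 h2. rewrite -mulrBr. rewrite ler_piMl //.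
  move=> _ h1 h2. rewrite -mulrBr. apply: mulr_ge0_le0 => //. exact: ltW.
have H2 : \sum_P cbarp c f P * S P <= BI / c f.
  apply: le_trans (_ : \sum_(P : PT) \sum_(e in val P) c e / c f * z e P <= _).
    apply: ler_sum => P _; rewrite /S mulr_sumr; apply: ler_sum => e eP.
    by apply: ler_wpM2r => //; apply: cbarp_le.
  rewrite (exchange_big_dep xpredT) //=.
  apply: le_trans (_ : \sum_e c e * (\sum_(P : PT | e \in val P) z e P) / c f <= _).
    apply: ler_sum => e _; rewrite mulrAC mulr_sumr; apply: ler_sum => P _.
    by rewrite mulrAC.
  by rewrite -mulr_suml ler_wpM2r // invr_ge0 ltW.
rewrite /LP_obj /val_xz /Bp.
apply: le_trans (_ : \sum_P (cbarp c f P * x P - cbarp c f P * S P) <= _); last first.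
  by apply: ler_sum => P _; apply: H1.
rewrite sumrB lerB //.
Qed.

Lemma flow_value_le (x : PT -> R) z : Omega c BI z -> flow_value c BI x <= val_xz x z.
Proof.
move=> Oz; rewrite /flow_value.
have := @ge_inf R [set val_xz x z | z in Omega c BI].
move=> H; apply: H; last by exists z.
exists 0 => r [z' _ <-]; exact: val_ge0.
Qed.

Lemma flow_value_ge f (x : PT -> R) : 0 < c f -> (forall P, 0 <= x P) ->
  Num.max 0 (LP_obj c BI f x) <= flow_value c BI x.
Proof.
move=> cf x0; rewrite /flow_value; apply: lb_le_inf.
  by exists (val_xz x (fun _ _ => 0)), (fun _ _ => 0) => //; apply: Omega0.
move=> r [z Oz <-]; rewrite ge_max val_ge0 /=; exact: lower_bound.
Qed.
End Proof1.
Section Proof2.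
Variables (V A : finType) (tl hd : A -> V) (s t : V).
Variables (R : realType) (u c : A -> R) (BI : R).
Hypotheses (hc : forall e, 0 <= c e) (hB : 0 <= BI).
Local Notation PT := (stpath tl hd s t).
Variable (d : A) (y : PT -> R).
Hypotheses (y0 : forall P, 0 <= y P) (hne : forall P : PT, val P != finset.set0).

Definition eP (P : PT) : A :=
  if [pick e in val P | [forall e', (e' \in val P) ==> (c e <= c e')]] is Some e
  then e else d.

Lemma eP_spec P : eP P \in val P /\ forall e, e \in val P -> c (eP P) <= c e.
Proof.
rewrite /eP; case: pickP => [e /andP[eP /forallP H]|H].
  by split=> // e' e'P; have /implyP := H e'; apply.
exfalso; have [e0 e0P] : exists e0, e0 \in val P.
  by case/set0Pn: (hne P) => e0 ?; exists e0.
case: (@fin_argmin R A (fun e => e \in val P) c e0 e0P) => e [eP' He].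
have := H e; rewrite eP' /=; move/negP; apply; apply/forallP => e'.
by apply/implyP; apply: He.
Qed.

Definition m (P : PT) := c (eP P).

Lemma m_ge0 P : 0 <= m P. Proof. exact: hc. Qed.

Lemma cbarp_m f P : 0 < c f -> cbarp c f P = Num.min (m P / c f) 1.
Proof.
move=> cf; case: (eP_spec P) => eP1 eP2; apply/le_anti/andP; split.
  by apply: le_trans (bigmin_le_cond _ _ eP1) _; rewrite /cp.
apply: le_bigmin; first by rewrite ge_min lexx orbT.
move=> e ein; have h : m P / c f <= c e / c f by apply: ler_wpM2r; [rewrite invr_ge0 ltW | apply: eP2].
by rewrite /cp le_min ge_min h /= ge_min lexx orbT.
Qed.

Lemma LP_obj_m f : 0 < c f ->
  LP_obj c BI f y = \sum_P Num.min (m P / c f) 1 * y P - BI / c f.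
Proof.
by move=> cf; rewrite /LP_obj /Bp; congr (_ - _); apply: eq_bigr => P _; rewrite cbarp_m.
Qed.

Definition al tau th (P : PT) : R := if m P < tau then 1 else if m P == tau then th else 0.

Definition zst tau th (e : A) (P : PT) : R := if e == eP P then al tau th P * y P else 0.

Lemma al_01 tau th (P : PT) : 0 <= th <= 1 -> 0 <= al tau th P <= 1.
Proof.
move=> /andP[h1 h2]; rewrite /al; case: ifP => _; first by rewrite ler01 lexx.
by case: ifP => _; rewrite ?h1 ?h2 ?lexx ?ler01.
Qed.

Lemma sum_zst tau th (P : PT) : \sum_(e in val P) zst tau th e P = al tau th P * y P.
Proof.
case: (eP_spec P) => eP1 _; rewrite (bigD1 (eP P)) //= /zst eqxx big1 ?addr0 //.
by move=> e /andP[_ /negbTE ->].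
Qed.

Lemma val_zst tau th : 0 <= th <= 1 ->
  val_xz y (zst tau th) = \sum_P (1 - al tau th P) * y P.
Proof.
move=> hth; apply: eq_bigr => P _; rewrite sum_zst.
have /andP[a0 a1] := al_01 tau P hth.
rewrite -{1}(mul1r (y P)) -mulrBl max_r //; apply: mulr_ge0 => //; by rewrite subr_ge0.
Qed.

Lemma cost_zst tau th :
  \sum_e c e * \sum_(P : PT | e \in val P) zst tau th e P = \sum_P m P * (al tau th P * y P).
Proof.
have H : forall e, \sum_(P : PT | e \in val P) zst tau th e P = \sum_P zst tau th e P.
  move=> e; rewrite big_mkcond; apply: eq_bigr => P _; case: ifP => // eP0.
  rewrite /zst; case: eqP => // Ee; case: (eP_spec P) => H _; move: H.
  by rewrite -Ee eP0.
under eq_bigr do rewrite H mulr_sumr.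
rewrite exchange_big /=; apply: eq_bigr => P _.
rewrite (bigD1 (eP P)) //= /zst eqxx big1 ?addr0 //.
by move=> e /negbTE ->; rewrite mulr0.
Qed.

Lemma zst_ge0 tau th : 0 <= th <= 1 -> forall e P, 0 <= zst tau th e P.
Proof.
move=> hth e P; rewrite /zst; case: ifP => // _.
have /andP[a0 _] := al_01 tau P hth; exact: mulr_ge0.
Qed.

Definition Slt b := \sum_P (if m P < b then m P * y P else 0).
Definition Sle b := \sum_P (if m P <= b then m P * y P else 0).

Lemma cost_split tau th :
  \sum_P m P * (al tau th P * y P) = Slt tau + th * (Sle tau - Slt tau).
Proof.
rewrite /Slt /Sle -sumrB mulr_sumr -big_split /=; apply: eq_bigr => P _.
rewrite /al; case: (ltrgtP (m P) tau) => h; rewrite ?eqxx; try lra.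
Qed.


Lemma LP_diff fa fb : 0 < c fa -> c fa < c fb ->
  (forall P, m P <= c fa \/ c fb <= m P) ->
  LP_obj c BI fa y - LP_obj c BI fb y = ((c fa)^-1 - (c fb)^-1) * (Slt (c fb) - BI).
Proof.
move=> ha hab Hnb; have hb : 0 < c fb by apply: lt_trans hab.
set a := c fa in ha hab Hnb *; set b := c fb in hb hab Hnb *.
have E : \sum_P Num.min (m P / a) 1 * y P - \sum_P Num.min (m P / b) 1 * y P
    = \sum_P (a^-1 - b^-1) * (if m P < b then m P * y P else 0).
  rewrite -sumrB; apply: eq_bigr => P _.
  case: ltP => hmb.
    have hma : m P <= a by case: (Hnb P) => // h; exfalso; move: h; rewrite leNgt hmb.
    rewrite min_l; last by rewrite ler_pdivrMr // mul1r.
    rewrite min_l; last by rewrite ler_pdivrMr // mul1r ltW.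
    ring.
  rewrite min_r; last by rewrite ler_pdivlMr // mul1r (le_trans (ltW hab)).
  by rewrite min_r ?mulr0 ?subrr // ler_pdivlMr // mul1r.
rewrite !LP_obj_m // mulrBr /Slt mulr_sumr -E; ring.
Qed.


Lemma Slt_le_Sle b : Slt b <= Sle b.
Proof.
apply: ler_sum => P _; case: ifP => h; first by rewrite (ltW h).
by case: ifP => // _; apply: mulr_ge0 => //; apply: m_ge0.
Qed.

Lemma construct : (exists e, 0 < c e) -> exists f, 0 < c f /\
  exists z, Omega c BI z /\ val_xz y z <= Num.max 0 (LP_obj c BI f y).
Proof.
case=> e0 he0.
case: (@fin_argmax R A (fun f => 0 < c f) (fun f => LP_obj c BI f y) e0 he0) => f0 [hf0 Hmax].
exists f0; split => //.
set tau := c f0 in hf0 *.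
have Hi : Slt tau <= BI.
  rewrite leNgt; apply/negP => Hlt.
  case: (boolP [exists P, (0 < m P) && (m P < tau)]) => hex; last first.
    move: Hlt; rewrite /Slt big1 ?ltNge ?hB // => P _.
    case: ifP => // hm; have: ~~ ((0 < m P) && (m P < tau)).
      by move: hex; rewrite negb_exists => /forallP.
    rewrite hm andbT -leNgt => h0.
    have -> : m P = 0 by apply: le_anti; rewrite h0 m_ge0.
    by rewrite mul0r.
  case/existsP: hex => P /andP[h1 h2].
  case: (@fin_argmax R A (fun e => (0 < c e) && (c e < tau)) c (eP P)) => [|g [/andP[hg1 hg2] Hg]].
    by rewrite h1 h2.
  have Hnb : forall Q, m Q <= c g \/ tau <= m Q.
    move=> Q; case: (ltP (m Q) tau) => hQ; last by right.
    left; case: (ltP 0 (m Q)) => hQ0; first by apply: Hg; rewrite hQ0 hQ.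
    by apply: le_trans hQ0 (ltW hg1).
  have := LP_diff hg1 hg2 Hnb; move: (Hmax g hg1).
  have hinv : tau^-1 < (c g)^-1 by rewrite ltf_pV2 ?posrE.
  have hpos : 0 < ((c g)^-1 - tau^-1) * (Slt tau - BI).
    by apply: mulr_gt0; rewrite subr_gt0.
  move=> h1' h2'; move: hpos; rewrite -h2' subr_gt0 ltNge h1' //.
case: (lerP BI (Sle tau)) => HB2.
  pose D := Sle tau - Slt tau.
  have D0 : 0 <= D by rewrite subr_ge0 Slt_le_Sle.
  pose th := if D == 0 then 0 else (BI - Slt tau) / D.
  have hth : 0 <= th <= 1.
    rewrite /th; case: eqP => [|hD]; first by rewrite lexx ler01.
    have Dp : 0 < D by rewrite lt_neqAle eq_sym D0 andbT; apply/eqP.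
    apply/andP; split; first by apply: divr_ge0; [rewrite subr_ge0 | exact: ltW].
    rewrite ler_pdivrMr // mul1r /D; lra.
  have hcost : Slt tau + th * D = BI.
    rewrite /th; case: eqP => [hD1|hD2]; first by rewrite mul0r; move: hD1; rewrite /D => hD1; lra.
    have hD3 : D != 0 by apply/eqP.
    by rewrite (divfK hD3) addrC subrK.
  exists (zst tau th); split.
    split; first exact: zst_ge0.
    by rewrite cost_zst cost_split -/D hcost.
  rewrite le_max; apply/orP; right; rewrite val_zst // LP_obj_m //.
  rewrite -{1}hcost -/D -cost_split mulr_suml -sumrB le_eqVlt; apply/orP; left; apply/eqP.
  have tau0 : tau != 0 by rewrite gt_eqF.
  apply: eq_bigr => P _; rewrite /al.
  case: (ltrgtP (m P) tau) => hm.
  - rewrite min_l; last by rewrite ler_pdivrMr // mul1r ltW.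
    by field.
  - rewrite min_r; last by rewrite ler_pdivlMr // mul1r ltW.
    by field.
  - rewrite hm divff // min_l ?lexx //; rewrite /tau in tau0 *; by field.
(* everything removable *)
have Hnone : forall P, m P <= tau.
  move=> P; rewrite leNgt; apply/negP => hP.
  case: (@fin_argmin R A (fun e => tau < c e) c (eP P) hP) => g [hg1 Hg].
  have hg0 : 0 < c g by apply: lt_trans hg1.
  have Hnb : forall Q, m Q <= tau \/ c g <= m Q.
    move=> Q; case: (leP (m Q) tau) => hQ; first by left.
    by right; apply: Hg.
  have ES : Slt (c g) = Sle tau.
    apply: eq_bigr => Q _; case: (Hnb Q) => hQ.
      by rewrite hQ (le_lt_trans hQ hg1).
    by rewrite ltNge hQ /= leNgt (lt_le_trans hg1 hQ).
  have := LP_diff hf0 hg1 Hnb; move: (Hmax g hg0).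
  have hinv : (c g)^-1 < tau^-1 by rewrite ltf_pV2 ?posrE.
  have hneg : (tau^-1 - (c g)^-1) * (Slt (c g) - BI) < 0.
    by rewrite pmulr_rlt0 ?subr_gt0 // ES subr_lt0.
  move=> h1' h2'; move: hneg; rewrite -h2' subr_lt0 ltNge h1' //.
exists (zst tau 1); split.
  split; first by apply: zst_ge0; rewrite lexx ler01.
  by rewrite cost_zst cost_split mul1r addrC subrK ltW.
rewrite le_max; apply/orP; left; rewrite val_zst ?lexx ?ler01 // big1 // => P _.
rewrite /al; case: ifP => hlt; first by rewrite subrr mul0r.
move: (Hnone P); rewrite le_eqVlt => /orP[/eqP ->|h]; first by rewrite eqxx subrr mul0r.
by rewrite h in hlt.
Qed.

End Proof2.
Theorem theorem1 (V A : finType) (tl hd : A -> V) (s t : V)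
  (R : realType) (u c : A -> R) (BI : R)
  (hu : forall e, 0 <= u e) (hc : forall e, 0 <= c e) (hB : 0 <= BI)
  (hpos : exists e, 0 < c e)
  (xf : A -> stpath tl hd s t -> R)
  (hxf : forall f, 0 < c f -> LP_optimal u c BI f (xf f))
  (fstar : A) (hfstar : 0 < c fstar)
  (hmax : forall f, 0 < c f ->
     LP_obj c BI f (xf f) <= LP_obj c BI fstar (xf fstar)) :
  optimal_flow_strategy u c BI (xf fstar).
Proof.
have [[xs0 xscap] xsopt] := hxf fstar hfstar.
have hne : forall P : stpath tl hd s t, val P != finset.set0.
  move=> P0; apply/negP => /eqP eP0.
  pose y P := xf fstar P + (if P == P0 then 1 else 0).
  have yf : feasible_flow u y.
    split.
      move=> P; rewrite /y; apply: addr_ge0 => //; case: ifP => _ //; exact: ler01.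
    move=> e; rewrite /y big_split /= [X in _ + X]big1 ?addr0 //.
    move=> P eP; case: eqP => // PP0; move: eP; rewrite PP0 eP0.
    by rewrite inE.
  have := xsopt y yf; rewrite /LP_obj lerD2r /y.
  under eq_bigr do rewrite mulrDr.
  have E : \sum_(P : stpath tl hd s t) cbarp c fstar P * (if P == P0 then 1 else 0) = cbarp c fstar P0.
    rewrite (bigD1 P0) //= eqxx mulr1 big1 ?addr0 // => P hP.
    by rewrite (negbTE hP) mulr0.
  rewrite big_split /= E.
  have -> : cbarp c fstar P0 = 1 by rewrite /cbarp eP0 big_set0.
  move=> h; lra.
split; first by split.
move=> y [y0 ycap].
have [f [hf [z [Oz hv]]]] := construct hc hB fstar y0 hne hpos.
apply: le_trans (flow_value_le y Oz) _.
apply: le_trans hv _.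
apply: le_trans (flow_value_ge hc hB hfstar xs0).
rewrite ge_max le_max lexx /= le_max; apply/orP; right.
apply: le_trans (hmax f hf).
by have [_ Hopt] := hxf f hf; apply: Hopt.
Qed.
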